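(* Let $Z$ be a domain, $\pi$ a probability distribution on $Z$, $0\le a\le b$, $\mathcal{F}$ a family of functions from $Z$ to $[a,b]$, $p\in(0,1)$ and $n\ge1$. The function $g:Z^n\to\mathbb{R}$, \[g(X_1,\dots,X_n)=\sup_{f\in\mathcal{F}}\frac{\mathbb{E}_\pi[f]-\frac1n\sum_{i=1}^n f(X_i)}{\max\{p,\mathbb{E}_\pi[f]\}},\] satisfies the bounded difference inequality with constants $c_i=\frac{|b-a|}{np}$, $1\le i\le n$.
   Context: A function $g:\mathcal{X}^n\to\mathbb{R}$ satisfies the bounded difference inequality with nonnegative constants $c_1,\dots,c_n$ if for every $i$, $\sup_{x_1,\dots,x_n,x_i'\in\mathcal{X}}|g(x_1,\dots,x_n)-g(x_1,\dots,x_{i-1},x_i',x_{i+1},\dots,x_n)|\le c_i$. *)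

(* Defs.v *)
From HB Require Import structures.
From mathcomp Require Import all_boot all_order all_algebra.
From mathcomp Require Import all_classical all_reals all_analysis.
Set Implicit Arguments. Unset Strict Implicit. Unset Printing Implicit Defensive.
Import Order.TTheory GRing.Theory Num.Theory.
Local Open Scope classical_set_scope.
Local Open Scope ring_scope.

Definition bounded_difference (X : Type) (R : realType) (n : nat)
  (g : ('I_n -> X) -> R) (c : 'I_n -> R) : Prop :=
  forall (i : 'I_n) (x : 'I_n -> X) (xi' : X),
    `|g x - g (fun j => if j == i then xi' else x j)| <= c i.

Definition expect d (T : measurableType d) (R : realType)
  (P : probability T R) (f : T -> R) : R := Rintegral P setT f.

Definition g_ratio d (T : measurableType d) (R : realType)
  (P : probability T R) (F : set (T -> R)) (p : R) (n : nat)
  (X : 'I_n -> T) : R :=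
  sup [set ((expect P f - n%:R^-1 * \sum_(i < n) f (X i))
              / Num.max p (expect P f)) | f in F].

(* Main.v *)
Require Import Defs.
From HB Require Import structures.
From mathcomp Require Import all_boot all_order all_algebra.
From mathcomp Require Import all_classical all_reals all_analysis.
From mathcomp Require Import lra ring.
Import Order.TTheory GRing.Theory Num.Theory.
Local Open Scope classical_set_scope.
Local Open Scope ring_scope.

Lemma sup_le_aux (R : realType) (I : Type) (F : set I) (u v : I -> R) c :
  F !=set0 -> (forall i, F i -> v i <= 1) -> (forall i, F i -> u i <= v i + c) ->
  sup (u @` F) <= sup (v @` F) + c.
Proof.
move=> [i0 Fi0] v1 uv.
apply: ge_sup; first by exists (u i0); exists i0.
move=> _ [i Fi <-].
apply: le_trans (uv i Fi) _; rewrite lerD2r.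
apply: ub_le_sup; last by exists i.
by exists 1 => _ [j Fj <-]; apply: v1.
Qed.

Lemma sup_diff (R : realType) (I : Type) (F : set I) (u v : I -> R) c :
  (forall i, F i -> u i <= 1) -> (forall i, F i -> v i <= 1) ->
  (forall i, F i -> `|u i - v i| <= c) -> 0 <= c ->
  `|sup (u @` F) - sup (v @` F)| <= c.
Proof.
move=> u1 v1 uvc c0.
have [->|F0] := eqVneq F set0.
  by rewrite !image_set0 sup0 subrr normr0.
have F0' : F !=set0 by apply/set0P.
have h1 : sup (u @` F) <= sup (v @` F) + c.
  apply: sup_le_aux => // i Fi.
  by have := uvc i Fi; rewrite ler_norml => /andP[_ +]; lra.
have h2 : sup (v @` F) <= sup (u @` F) + c.
  apply: sup_le_aux => // i Fi.
  by have := uvc i Fi; rewrite ler_norml => /andP[+ _]; lra.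
rewrite ler_norml; apply/andP; split; lra.
Qed.

Theorem lemma5 (d : measure_display) (T : measurableType d) (R : realType)
  (P : probability T R) (a b : R) (F : set (T -> R)) (p : R) (n : nat) :
  0 <= a -> a <= b ->
  (forall f, F f -> measurable_fun setT f) ->
  (forall f, F f -> forall z, a <= f z <= b) ->
  0 < p < 1 -> (0 < n)%N ->
  bounded_difference (g_ratio P F p (n:=n))
    (fun _ => `|b - a| / (n%:R * p)).
Proof.
move=> a0 ab _ Fab /andP[p0 p1] n0 i x xi'.
rewrite /g_ratio.
set x' := (fun j => if j == i then xi' else x j).
have nR : 0 < (n%:R : R) by rewrite ltr0n.
apply: sup_diff.
- move=> f Ff.
  have m0 : 0 <= n%:R^-1 * \sum_(j < n) f (x j).
    by apply: mulr_ge0; [rewrite invr_ge0 ltW | apply: sumr_ge0 => j _; apply: le_trans a0 _; case/andP: (Fab f Ff (x j))].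
  have M0 : 0 < Num.max p (expect P f) by rewrite lt_max p0.
  rewrite ler_pdivrMr // mul1r; have : expect P f <= Num.max p (expect P f) by rewrite le_max lexx orbT.
  lra.
- move=> f Ff.
  have m0 : 0 <= n%:R^-1 * \sum_(j < n) f (x' j).
    by apply: mulr_ge0; [rewrite invr_ge0 ltW | apply: sumr_ge0 => j _; apply: le_trans a0 _; case/andP: (Fab f Ff (x' j))].
  have M0 : 0 < Num.max p (expect P f) by rewrite lt_max p0.
  rewrite ler_pdivrMr // mul1r; have : expect P f <= Num.max p (expect P f) by rewrite le_max lexx orbT.
  lra.
- move=> f Ff.
  set M := Num.max p (expect P f).
  have M0 : p <= M by rewrite le_max lexx.
  have hs : \sum_(j < n) f (x' j) - \sum_(j < n) f (x j) = f xi' - f (x i).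
    rewrite (bigD1 i) //= (bigD1 i (P:=xpredT)) //= /x' eqxx.
    rewrite (eq_bigr (fun j => f (x j))); last by move=> j /negbTE ->.
    by rewrite opprD addrACA subrr addr0.
  rewrite -mulrBl.
  have -> : expect P f - n%:R^-1 * \sum_(j < n) f (x j) -
    (expect P f - n%:R^-1 * \sum_(j < n) f (x' j)) =
    n%:R^-1 * (\sum_(j < n) f (x' j) - \sum_(j < n) f (x j)) by ring.
  rewrite normrM [`|_^-1|]ger0_norm ?invr_ge0; last by apply: le_trans (ltW p0) M0.
  rewrite normrM [`|_^-1|]ger0_norm ?invr_ge0; last exact: ltW.
  rewrite hs.
  have hf : `|f xi' - f (x i)| <= `|b - a|.
    have := Fab f Ff xi'; have := Fab f Ff (x i).
    rewrite [`|b - a|]ger0_norm ?subr_ge0 // => /andP[h1 h2] /andP[h3 h4].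
    rewrite ler_norml; apply/andP; split; lra.
  have Mp : M^-1 <= p^-1 by rewrite lef_pV2 ?posrE //; apply: lt_le_trans p0 M0.
  have Mi : 0 <= M^-1 by rewrite invr_ge0; apply: le_trans (ltW p0) M0.
  rewrite invfM mulrC (mulrC `|b - a|) -!mulrA mulrCA; apply: ler_wpM2l; first by rewrite invr_ge0 ltW.
  apply: ler_pM => //.
- by rewrite divr_ge0 // mulr_ge0 // ltW.
Qed.
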